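(* Let a group $G$ act by combinatorial isometries without cube inversions on a $\mathrm{CAT}(0)$ cube complex $Z$, and let $c\colon Z\to Y$ be the collapse of a strongly collapsible $G$-invariant family $\mathfrak{H}$ of hyperplanes consisting of finitely many, say $n$, $G$-orbits of hyperplanes. Then for all vertices $z_1,z_2$ of $Z$, \[\frac{d_Z(z_1,z_2)-n}{n+1}\le d_Y(c(z_1),c(z_2))\le d_Z(z_1,z_2).\] In particular, preimages of vertices of $Y$ under $c$ have diameter at most $n$. (No cocompactness is assumed.)
   Context: $d_Z$, $d_Y$ denote the combinatorial metrics (graph metrics of the 1-skeleta). Hyperplanes of a $\mathrm{CAT}(0)$ cube complex are equivalence classes of edges under the relation generated by ''being opposite edges of a square''; each has two halfspaces and a carrier (union of closed cubes containing a dual edge). $\mathrm{Sep}(A\mid B)$ is the set of hyperplanes with $A$ in one halfspace and $B$ in the other (a hyperplane standing for its carrier). A cube inversion is an isometry stabilizing a cube without fixing it pointwise. A $G$-invariant family $\mathfrak{H}$ is strongly collapsible if for every $H\in\mathfrak{H}$ and $g\in G\setminus\mathrm{Stab}(H)$, $\mathrm{Sep}(H\mid gH)\not\subseteq\mathfrak{H}$. The collapse of $\mathfrak{H}$ (with $\mathfrak{W}$ the set of all hyperplanes) is the map $c\colon Z\to Y$ where $Y$ has as vertices the choices of one halfspace for each hyperplane of $\mathfrak{W}\setminus\mathfrak{H}$, pairwise intersecting and each containing any given vertex of $Z$ for all but finitely many hyperplanes, $2^k$ vertices spanning a $k$-cube iff they differ exactly on $k$ hyperplanes and realize all choices there; $c$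 maps a vertex to the halfspaces containing it and is affine on cubes. *)

(* Defs.v *)
From HB Require Import structures.
From mathcomp Require Import all_boot all_order all_algebra.
From Stdlib Require Import Relation_Operators.
From Stdlib Require List.
Set Implicit Arguments. Unset Strict Implicit. Unset Printing Implicit Defensive.

Section Graphs.
Variable V : Type.

Inductive walk (e : V -> V -> Prop) : V -> V -> nat -> Prop :=
| walk0 x : walk e x x 0
| walkS x y z k : e x y -> walk e y z k -> walk e x z k.+1.

Definition gdist (e : V -> V -> Prop) (x y : V) (d : nat) : Prop :=
  walk e x y d /\ forall m, walk e x y m -> d <= m.

Definition between (e : V -> V -> Prop) (x m y : V) : Prop :=
  forall a b c, gdist e x m a -> gdist e m y b -> gdist e x y c -> a + b = c.

(* Median graphs = 1-skeleta of CAT(0) cube complexes (Chepoi, Roller). *)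
Definition median_graph (adj : V -> V -> Prop) : Prop :=
  [/\ (forall x y, adj x y -> adj y x),
      (forall x, ~ adj x x),
      (forall x y, exists d, walk adj x y d) &
      (forall x y z, exists m,
         [/\ between adj x m y, between adj y m z, between adj x m z &
             forall m', between adj x m' y -> between adj y m' z ->
                        between adj x m' z -> m' = m])].

Variable adj : V -> V -> Prop.

Definition cube (S : V -> Prop) : Prop :=
  exists k (phi : {ffun 'I_k -> bool} -> V),
    [/\ injective phi,
        (forall v, S v <-> exists a, phi a = v) &
        (forall a b, adj (phi a) (phi b) <-> #|[set i | a i != b i]| = 1)].

(* Generating relation on (oriented) edges: opposite edges of a square, and
   reversal of orientation (so that hyperplanes are classes of unoriented
   edges). *)
Definition edge_gen (e f : V * V) : Prop :=
  let: (x, y) := e in let: (x', y') := f in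
  (adj x y /\ adj y y' /\ adj y' x' /\ adj x' x /\ x <> y' /\ y <> x')
  \/ (adj x y /\ x' = y /\ y' = x).

Definition hyperplane (H : V -> V -> Prop) : Prop :=
  exists x0 y0, adj x0 y0 /\
    H = (fun x y => clos_refl_sym_trans (V * V) edge_gen (x0, y0) (x, y)).

(* x and y lie in the same halfspace of H: joined by a walk crossing no
   edge of H.  A halfspace of H is a class  sameside H x. *)
Definition sameside (H : V -> V -> Prop) (x y : V) : Prop :=
  exists k, walk (fun a b => adj a b /\ ~ H a b) x y k.

Definition carrier (H : V -> V -> Prop) (v : V) : Prop :=
  exists S, [/\ cube S, S v & exists x y, [/\ S x, S y & H x y]].

Definition Sep (A B K : V -> V -> Prop) : Prop :=
  hyperplane K /\
  exists x y, [/\ ~ sameside K x y,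
                  (forall a, carrier A a -> sameside K x a) &
                  (forall b, carrier B b -> sameside K y b)].

Variable HH : (V -> V -> Prop) -> Prop.

Definition kept (K : V -> V -> Prop) : Prop := hyperplane K /\ ~ HH K.

(* Vertices of Y: a choice of a halfspace for each hyperplane not in HH
   (and the empty set for everything else), pairwise intersecting, and
   containing any given vertex of Z for all but finitely many hyperplanes. *)
Definition Yvert (s : (V -> V -> Prop) -> V -> Prop) : Prop :=
  [/\ (forall K, ~ kept K -> s K = (fun _ => False)),
      (forall K, kept K -> exists x, s K = sameside K x),
      (forall K K', kept K -> kept K' -> exists y, s K y /\ s K' y) &
      (forall z, exists l : list (V -> V -> Prop),
          forall K, kept K -> ~ s K z -> List.In K l)].

Definition Yadj (s t : (V -> V -> Prop) -> V -> Prop) : Prop :=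
  [/\ Yvert s, Yvert t &
      exists K0, [/\ kept K0, s K0 <> t K0 & forall K, K <> K0 -> s K = t K]].

Definition collapse (z : V) : (V -> V -> Prop) -> V -> Prop :=
  fun K y => kept K /\ sameside K z y.

End Graphs.

Record group := Group {
  gcar :> Type;
  gmul : gcar -> gcar -> gcar;
  gone : gcar;
  ginv : gcar -> gcar;
  gmulA : forall x y z, gmul x (gmul y z) = gmul (gmul x y) z;
  gmul1 : forall x, gmul gone x = x;
  gmulV : forall x, gmul (ginv x) x = gone }.

Section Action.
Variables (V : Type) (adj : V -> V -> Prop) (G : group) (act : G -> V -> V).

Definition is_action : Prop :=
  (forall x, act (gone G) x = x) /\
  (forall g h x, act (gmul g h) x = act g (act h x)).

(* action by combinatorial isometries = graph automorphisms of the 1-skeleton *)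
Definition by_isometries : Prop :=
  forall g x y, adj x y <-> adj (act g x) (act g y).

Definition no_cube_inversions : Prop :=
  forall g (S : V -> Prop), cube adj S -> (forall v, S v <-> S (act g v)) ->
    forall v, S v -> act g v = v.

Definition htrans (g : G) (H : V -> V -> Prop) : V -> V -> Prop :=
  fun x y => H (act (ginv g) x) (act (ginv g) y).

Variable HH : (V -> V -> Prop) -> Prop.

Definition G_invariant : Prop := forall g H, HH H -> HH (htrans g H).

Definition strongly_collapsible : Prop :=
  forall H g, HH H -> htrans g H <> H ->
    ~ (forall K, Sep adj H (htrans g H) K -> HH K).

Definition n_orbits (n : nat) : Prop :=
  exists reps : 'I_n -> (V -> V -> Prop),
    [/\ (forall i, HH (reps i)),
        (forall i j g, htrans g (reps i) = reps j -> i = j) &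
        (forall H, HH H -> exists i g, H = htrans g (reps i))].
End Action.

(* Main.v *)
Require Import Defs.
From HB Require Import structures.
From mathcomp Require Import all_boot all_order all_algebra.
From mathcomp Require Import zify lra.
From Stdlib Require Import Relation_Operators ClassicalEpsilon Classical FunctionalExtensionality PropExtensionality.
From Stdlib Require List.
Import Order.TTheory GRing.Theory Num.Theory.
Set Implicit Arguments. Unset Strict Implicit. Unset Printing Implicit Defensive.

Definition pb (P : Prop) : bool := if excluded_middle_informative P then true else false.
Lemma pbP (P : Prop) : reflect P (pb P).
Proof. rewrite /pb; case: excluded_middle_informative => h; by constructor. Qed.

Section Walks.
Variable V : Type.
Implicit Types e : V -> V -> Prop.

Lemma walk_cat e x y z k l : walk e x y k -> walk e y z l -> walk e x z (k + l).
Proof. elim=> [//|a b c k' h _ IH] w; rewrite addSn; exact: walkS h (IH w). Qed.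

Lemma walk_rcons e x y z k : walk e x y k -> e y z -> walk e x z k.+1.
Proof. move=> w h; rewrite -addn1; apply: walk_cat w _; apply: walkS h (walk0 _ _). Qed.

Lemma walk_rev e x y k : (forall a b, e a b -> e b a) -> walk e x y k -> walk e y x k.
Proof. move=> sym; elim=> [a|a b c k' h _ IH]; first exact: walk0.
exact: walk_rcons IH (sym _ _ h). Qed.

Lemma walk_mono e e' x y k : (forall a b, e a b -> e' a b) -> walk e x y k -> walk e' x y k.
Proof. move=> H; elim=> [a|a b c k' h _ IH]; [exact: walk0| exact: walkS (H _ _ h) IH]. Qed.

Lemma gdist_ex e x y : (exists k, walk e x y k) -> exists d, gdist e x y d.
Proof.
move=> [k wk]; apply: NNPP => nex.
suff: forall k, ~ walk e x y k by move/(_ k).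
elim/ltn_ind => m IH wm; apply: nex; exists m; split=> // m' wm'.
apply: NNPP => hlt; apply: (IH m') => //; lia.
Qed.

Lemma gdist_uniq e x y a b : gdist e x y a -> gdist e x y b -> a = b.
Proof. move=> [wa ha] [wb hb]; apply/eqP; by rewrite eqn_leq (ha _ wb) (hb _ wa). Qed.

Lemma walk_fun e x y k : walk e x y k ->
  exists v : nat -> V, [/\ v 0 = x, v k = y & forall i, i < k -> e (v i) (v i.+1)].
Proof.
elim=> [a|a b c k' h _ [v [v0 vk hv]]]; first by exists (fun _ => a).
exists (fun i => if i is j.+1 then v j else a); split => //.
by case=> [|i] /= lt; [rewrite v0 | apply: hv].
Qed.

Lemma walk_seg e (v : nat -> V) k : (forall i, i < k -> e (v i) (v i.+1)) ->
  forall i j, i <= j <= k -> walk e (v i) (v j) (j - i).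
Proof.
move=> hv i j /andP[]; elim: j => [|j IH] hij hjk.
  have -> : i = 0 by lia.
  rewrite subnn; exact: walk0.
case: (ltngtP i j.+1) hij => // [lt|->] _; last by rewrite subnn; exact: walk0.
have -> : j.+1 - i = (j - i).+1 by lia.
apply: walk_rcons (IH _ _) (hv _ _); lia.
Qed.

Lemma walkS_inv e x y k : walk e x y k.+1 -> exists x', e x x' /\ walk e x' y k.
Proof. move=> w; inversion w; subst; eauto. Qed.

Lemma walk0_inv e x y : walk e x y 0 -> x = y.
Proof. move=> w; by inversion w. Qed.

End Walks.
Section Dist.
Variable V : Type.
Variable adj : V -> V -> Prop.
Hypothesis Hmg : median_graph adj.

Lemma adj_sym x y : adj x y -> adj y x.
Proof. by case: Hmg => h _ _ _; apply: h. Qed.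
Lemma adj_irr x : ~ adj x x.
Proof. by case: Hmg => _ h _ _; apply: h. Qed.
Lemma conn x y : exists d, walk adj x y d.
Proof. by case: Hmg => _ _ h _; apply: h. Qed.

Definition dist x y : nat := epsilon (inhabits 0) (gdist adj x y).

Lemma dist_gdist x y : gdist adj x y (dist x y).
Proof. rewrite /dist; apply: epsilon_spec; apply: gdist_ex; exact: conn. Qed.

Lemma dist_walk x y : walk adj x y (dist x y).
Proof. by case: (dist_gdist x y). Qed.

Lemma dist_le x y k : walk adj x y k -> dist x y <= k.
Proof. by case: (dist_gdist x y) => _ h; apply: h. Qed.

Lemma gdist_dist x y k : gdist adj x y k -> k = dist x y.
Proof. move=> h; exact: gdist_uniq h (dist_gdist x y). Qed.

Lemma distC x y : dist x y = dist y x.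
Proof.
apply/eqP; rewrite eqn_leq; apply/andP; split; apply: dist_le;
  apply: walk_rev adj_sym _; exact: dist_walk.
Qed.

Lemma dist_tri x y z : dist x z <= dist x y + dist y z.
Proof. apply: dist_le; apply: walk_cat; exact: dist_walk. Qed.

Lemma dist_xx x : dist x x = 0.
Proof. by apply/eqP; rewrite -leqn0; apply: dist_le; apply: walk0. Qed.

Lemma dist0 x y : dist x y = 0 -> x = y.
Proof. move=> h; have := dist_walk x y; rewrite h; exact: walk0_inv. Qed.

Lemma dist_adj x y : adj x y -> dist x y = 1.
Proof.
move=> a; apply/eqP; rewrite eqn_leq; apply/andP; split.
  apply: dist_le; apply: walkS a (walk0 _ _).
rewrite lt0n; apply/eqP => /dist0 e; subst; exact: adj_irr a.
Qed.

Lemma dist1_adj x y : dist x y = 1 -> adj x y.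
Proof.
move=> h; have w := dist_walk x y; rewrite h in w; have [y0 [H0 H2]] := walkS_inv w.
by have e := walk0_inv H2; subst.
Qed.

Lemma dist_adj_le x y z : adj y z -> dist x z <= (dist x y).+1.
Proof. move=> a; have := dist_tri x y z; rewrite (dist_adj a); lia. Qed.

Lemma dist_step x y k : dist x y = k.+1 -> exists x', adj x x' /\ dist x' y = k.
Proof.
move=> h; have w := dist_walk x y; rewrite h in w; have [y0 [H0 H2]] := walkS_inv w.
exists y0; split => //.
have := dist_le H2; have := dist_tri x y0 y; rewrite h (dist_adj H0); lia.
Qed.

Lemma between_dist x m y : between adj x m y -> dist x m + dist m y = dist x y.
Proof. move=> h; apply: h; exact: dist_gdist. Qed.

Lemma dist_between x m y : dist x m + dist m y = dist x y -> between adj x m y.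
Proof. move=> h a b c ha hb hc; by rewrite (gdist_dist ha) (gdist_dist hb) (gdist_dist hc). Qed.

Lemma median x y z : exists m,
  [/\ dist x m + dist m y = dist x y, dist y m + dist m z = dist y z &
      dist x m + dist m z = dist x z].
Proof.
case: Hmg => _ _ _ /(_ x y z) [m [h1 h2 h3 _]]; exists m.
by split; apply: between_dist.
Qed.

Lemma median_uniq x y z m m' :
  dist x m + dist m y = dist x y -> dist y m + dist m z = dist y z ->
  dist x m + dist m z = dist x z ->
  dist x m' + dist m' y = dist x y -> dist y m' + dist m' z = dist y z ->
  dist x m' + dist m' z = dist x z -> m = m'.
Proof.
case: Hmg => _ _ _ /(_ x y z) [c [_ _ _ hu]] h1 h2 h3 h1' h2' h3'.
have e1 := hu m (dist_between h1) (dist_between h2) (dist_between h3).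
have e2 := hu m' (dist_between h1') (dist_between h2') (dist_between h3').
by rewrite e1 e2.
Qed.

Lemma bip x a b : adj a b -> dist x a <> dist x b.
Proof.
move=> ab; have [m [h1 h2 h3]] := median x a b.
rewrite (dist_adj ab) in h2.
have [ma|mb]: dist a m = 0 \/ dist m b = 0 by lia.
- move/dist0: ma => e; subst m; rewrite (dist_adj ab) in h3; lia.
- move/dist0: mb => e; subst m; rewrite (dist_adj (adj_sym ab)) in h1; lia.
Qed.

Lemma bip2 x a b : adj a b -> dist x b = (dist x a).+1 \/ dist x a = (dist x b).+1.
Proof.
move=> ab; have := bip (x:=x) ab; have := dist_adj_le x ab.
have := dist_adj_le x (adj_sym ab); lia.
Qed.

Lemma dist2 p q c : adj p c -> adj c q -> p <> q -> ~ adj p q -> dist p q = 2.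
Proof.
move=> pc cq pq npq; have := dist_tri p c q; rewrite (dist_adj pc) (dist_adj cq).
have : dist p q <> 0 by move/dist0.
have : dist p q <> 1.
  move=> h; have w := dist_walk p q; rewrite h in w; have [y0 [H0 H2]] := walkS_inv w.
  by have e := walk0_inv H2; subst.
lia.
Qed.

Lemma noK23 p q c1 c2 c3 : p <> q ->
  adj p c1 -> adj p c2 -> adj p c3 -> adj c1 q -> adj c2 q -> adj c3 q ->
  c1 <> c2 -> c2 <> c3 -> c1 <> c3 -> False.
Proof.
move=> pq p1 p2 p3 q1 q2 q3 n12 n23 n13.
have nadj : forall c c', adj p c -> adj p c' -> ~ adj c c'.
  move=> c c' pc pc' cc'; apply: (bip (x:=p) cc'); by rewrite !dist_adj.
have d12 : dist c1 c2 = 2 by apply: dist2 (adj_sym p1) p2 n12 (nadj _ _ p1 p2).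
have d23 : dist c2 c3 = 2 by apply: dist2 (adj_sym p2) p3 n23 (nadj _ _ p2 p3).
have d13 : dist c1 c3 = 2 by apply: dist2 (adj_sym p1) p3 n13 (nadj _ _ p1 p3).
have [a1 b1] : dist c1 p = 1 /\ dist p c1 = 1 by split; apply: dist_adj => //; apply: adj_sym.
have [a2 b2] : dist c2 p = 1 /\ dist p c2 = 1 by split; apply: dist_adj => //; apply: adj_sym.
have [a3 b3] : dist c3 p = 1 /\ dist p c3 = 1 by split; apply: dist_adj => //; apply: adj_sym.
have [e1 f1] : dist c1 q = 1 /\ dist q c1 = 1 by split; apply: dist_adj => //; apply: adj_sym.
have [e2 f2] : dist c2 q = 1 /\ dist q c2 = 1 by split; apply: dist_adj => //; apply: adj_sym.
have [e3 f3] : dist c3 q = 1 /\ dist q c3 = 1 by split; apply: dist_adj => //; apply: adj_sym.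
apply: pq; apply: (@median_uniq c1 c2 c3 p q);
 by rewrite ?d12 ?d23 ?d13 ?a1 ?b1 ?a2 ?b2 ?a3 ?b3 ?e1 ?f1 ?e2 ?f2 ?e3 ?f3.
Qed.

End Dist.
Section Hyp.
Variable V : Type.
Variable adj : V -> V -> Prop.
Hypothesis Hmg : median_graph adj.

Definition hp (a b : V) : V -> V -> Prop :=
  fun x y => clos_refl_sym_trans (V * V) (edge_gen adj) (a, b) (x, y).

Definition Wd (e : V * V) (w : V) : bool := dist adj w e.1 < dist adj w e.2.

Lemma Wd_rev a b w : adj a b -> Wd (b, a) w = ~~ Wd (a, b) w.
Proof.
move=> ab; rewrite /Wd /=; have := bip2 Hmg w ab.
case: ltngtP; lia.
Qed.

Lemma square_W x y y' x' w : adj x y -> adj y y' -> adj y' x' -> adj x' x ->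
  x <> y' -> y <> x' -> Wd (x, y) w -> Wd (x', y') w.
Proof.
move=> xy yy' y'x' x'x nxy' nyx'; rewrite /Wd /= => lt.
have b1 := bip2 Hmg w xy; have b2 := bip2 Hmg w x'x.
have b3 := bip2 Hmg w yy'; have b4 := bip2 Hmg w y'x'.
apply: NNPP => /negP; rewrite -leqNgt => le.
have hy : dist adj w y = (dist adj w x).+1 by lia.
have hx' : dist adj w x' = (dist adj w x).+1 by lia.
have hy' : dist adj w y' = dist adj w x by lia.
have nadj : ~ adj x y' by move=> a; apply: (bip Hmg (x:=w) a); rewrite hy'.
have d2 : dist adj x y' = 2 by apply: (dist2 Hmg) xy yy' nxy' nadj.
have [m [h1 h2 h3]] := median Hmg w x y'.
rewrite d2 in h2; rewrite hy' in h3.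
rewrite (distC Hmg m x) in h1.
have xm : adj x m by apply: (dist1_adj Hmg); lia.
have my' : adj m y' by apply: (dist1_adj Hmg); lia.
have hm : (dist adj w m).+1 = dist adj w x by lia.
apply: (noK23 Hmg (p:=x) (q:=y') (c1:=y) (c2:=x') (c3:=m)) => //.
- exact: (adj_sym Hmg x'x).
- exact: (adj_sym Hmg y'x').
- by move=> e; subst; lia.
- by move=> e; subst; lia.
Qed.

Lemma edge_gen_adj e f : edge_gen adj e f -> adj e.1 e.2 /\ adj f.1 f.2.
Proof.
case: e f => [x y] [x' y'] /= [[h1 [h2 [h3 [h4 _]]]]|[h [-> ->]]].
  split => //; exact: (adj_sym Hmg h3).
split => //; exact: (adj_sym Hmg h).
Qed.

Definition Qinv (e0 e : V * V) : Prop :=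
  (forall w, Wd e w = Wd e0 w) \/ (forall w, Wd e w = ~~ Wd e0 w).

Lemma edge_gen_Q e0 e f : edge_gen adj e f -> (Qinv e0 e <-> Qinv e0 f).
Proof.
case: e f => [x y] [x' y'] /= [[xy [yy' [y'x' [x'x [n1 n2]]]]]|[xy [-> ->]]].
- have E : forall w, Wd (x, y) w = Wd (x', y') w.
    move=> w; apply/idP/idP; first exact: square_W.
    apply: square_W.
    + exact: (adj_sym Hmg y'x').
    + exact: (adj_sym Hmg yy').
    + exact: (adj_sym Hmg xy).
    + exact: (adj_sym Hmg x'x).
    + by move=> e; apply: n2.
    + by move=> e; apply: n1.
  rewrite /Qinv; split => -[h|h].
  + by left => w; rewrite -E h.
  + by right => w; rewrite -E h.
  + by left => w; rewrite E h.
  + by right => w; rewrite E h.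
- rewrite /Qinv; split => -[h|h].
  + by right => w; rewrite (Wd_rev (a:=x) (b:=y)) // h.
  + by left => w; rewrite (Wd_rev (a:=x) (b:=y)) // h negbK.
  + by right => w; rewrite -(h w) (Wd_rev (a:=x) (b:=y)) // negbK.
  + by left => w; have := h w; rewrite (Wd_rev (a:=x) (b:=y)) // => /(congr1 negb); rewrite !negbK.
Qed.

Lemma crst_Q e0 e1 e2 : clos_refl_sym_trans (V * V) (edge_gen adj) e1 e2 ->
  (adj e1.1 e1.2 <-> adj e2.1 e2.2) /\ (adj e1.1 e1.2 -> (Qinv e0 e1 <-> Qinv e0 e2)).
Proof.
elim => [a b h|a|a b _ [IH1 IH2]|a b c _ [IH1 IH2] _ [IH3 IH4]].
- have [ha hb] := edge_gen_adj h; split; first by split.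
  move=> _; exact: edge_gen_Q.
- by split.
- split; first by rewrite IH1.
  move=> hb; have ha : adj a.1 a.2 by rewrite IH1.
  by rewrite IH2.
- split; first by rewrite IH1 IH3.
  move=> ha; rewrite IH2 // IH4 //; by rewrite -IH1.
Qed.

Lemma hp_adj a b x y : adj a b -> hp a b x y -> adj x y.
Proof. by move=> ab /(crst_Q (a, b)) [/= h _]; rewrite -h. Qed.

Lemma hp_W a b x y : adj a b -> hp a b x y ->
  (forall w, Wd (x, y) w = Wd (a, b) w) \/ (forall w, Wd (x, y) w = ~~ Wd (a, b) w).
Proof.
move=> ab /(crst_Q (a, b)) [_ /(_ ab) [h _]]; apply: h; by left.
Qed.

Lemma cross_hp a b : adj a b -> forall k u w, dist adj u a = k -> adj u w ->
  Wd (a, b) u -> ~~ Wd (a, b) w -> hp a b u w.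
Proof.
move=> ab; elim=> [|k IH] u w hk uw; rewrite /Wd /= => Wu Ww.
- have e := dist0 Hmg hk; subst u.
  have hwa : dist adj w a = 1 by rewrite (distC Hmg w a) (dist_adj Hmg uw).
  have hh := bip2 Hmg w ab; rewrite -leqNgt in Ww.
  have : dist adj w b = 0 by lia.
  move/(dist0 Hmg) => ->; exact: rst_refl.
have [u' [uu' hu']] := dist_step Hmg hk.
have b1 := bip2 Hmg u ab; have b2 := bip2 Hmg w ab; have b3 := bip2 Hmg u' ab.
rewrite -leqNgt in Ww.
have l1 := dist_adj_le Hmg a uu'; have l1' := dist_adj_le Hmg a (adj_sym Hmg uu').
have l2 := dist_adj_le Hmg b uu'; have l2' := dist_adj_le Hmg b (adj_sym Hmg uu').
have l3 := dist_adj_le Hmg a uw; have l3' := dist_adj_le Hmg a (adj_sym Hmg uw).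
have l4 := dist_adj_le Hmg b uw; have l4' := dist_adj_le Hmg b (adj_sym Hmg uw).
have b5 := bip Hmg (x:=a) uw.
rewrite !(distC Hmg a) !(distC Hmg b) in l1 l1' l2 l2' l3 l3' l4 l4' b5.
have hub : dist adj u b = k.+2 by lia.
have hu'b : dist adj u' b = k.+1 by lia.
have hwa : dist adj w a = k.+2 by lia.
have hwb : dist adj w b = k.+1 by lia.
have nu'w : u' <> w by move=> e; subst; lia.
have nadj : ~ adj u' w.
  move=> a'; have := dist_adj_le Hmg a a'; rewrite !(distC Hmg a); lia.
have d2 : dist adj u' w = 2 by apply: (dist2 Hmg) (adj_sym Hmg uu') uw nu'w nadj.
have [m [h1 h2 h3]] := median Hmg u' w b.
rewrite d2 hwb hu'b in h1 h2 h3; rewrite (distC Hmg w m) in h2.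
have u'm : adj u' m by apply: (dist1_adj Hmg); lia.
have mw : adj m w by apply: (dist1_adj Hmg); lia.
have hmb : dist adj m b = k by lia.
have lm := dist_adj_le Hmg a mw; rewrite !(distC Hmg a) in lm.
have IH' := IH u' m hu' u'm.
have H1 : hp a b u' m by apply: IH'; rewrite /Wd /=; lia.
apply: rst_trans H1 _; apply: rst_step; left; split => //; split => //.
split; first exact: (adj_sym Hmg uw).
split; first exact: uu'.
split => // e; subst; lia.
Qed.

End Hyp.
Section Coll.
Variable V : Type.
Variable adj : V -> V -> Prop.
Hypothesis Hmg : median_graph adj.
Variable HH : (V -> V -> Prop) -> Prop.

Lemma hp_hyp a b : adj a b -> hyperplane adj (hp adj a b).
Proof. by move=> ab; exists a, b. Qed.

Lemma hyp_hp H : hyperplane adj H -> exists a b, adj a b /\ H = hp adj a b.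
Proof. by case=> a [b [ab ->]]; exists a, b. Qed.

Lemma hp_sym a b x y : adj a b -> hp adj a b x y -> hp adj a b y x.
Proof.
move=> ab h; have a' := hp_adj Hmg ab h.
apply: rst_trans h _; apply: rst_step; right; by split.
Qed.

Lemma hp_eq a b x y : hp adj a b x y -> hp adj x y = hp adj a b.
Proof.
move=> h; apply: functional_extensionality => x'; apply: functional_extensionality => y'.
apply: propositional_extensionality; split => h'.
- exact: rst_trans h h'.
- exact: rst_trans (rst_sym _ _ _ _ h) h'.
Qed.

Lemma hyp_eq H x y : hyperplane adj H -> H x y -> H = hp adj x y.
Proof. move=> /hyp_hp [a [b [ab ->]]] h; by rewrite (hp_eq h). Qed.

Lemma hyp_sym H x y : hyperplane adj H -> H x y -> H y x.
Proof. move=> /hyp_hp [a [b [ab ->]]]; exact: hp_sym. Qed.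

Lemma ss_refl H x : sameside adj H x x.
Proof. exists 0; exact: walk0. Qed.

Lemma ss_trans H x y z : sameside adj H x y -> sameside adj H y z -> sameside adj H x z.
Proof. move=> [k hk] [l hl]; exists (k + l); exact: walk_cat hk hl. Qed.

Lemma ss_sym H x y : hyperplane adj H -> sameside adj H x y -> sameside adj H y x.
Proof.
move=> hH [k hk]; exists k; apply: (walk_rev _ hk) => a b [ab nH]; split.
  exact: (adj_sym Hmg ab).
by move=> h; apply: nH; apply: hyp_sym.
Qed.

Lemma ss_edge H x y : adj x y -> ~ H x y -> sameside adj H x y.
Proof. move=> xy nH; exists 1; apply: walkS (walk0 _ _); by split. Qed.

Lemma ss_seq H (v : nat -> V) i j : (forall l, i <= l < j -> adj (v l) (v l.+1)) ->
  (forall l, i <= l < j -> ~ H (v l) (v l.+1)) -> i <= j -> sameside adj H (v i) (v j).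
Proof.
move=> hv hn; elim: j hv hn => [|j IH] hv hn hij.
  have -> : i = 0 by lia.
  exact: ss_refl.
case: (ltngtP i j.+1) hij => // [lt|->] _; last exact: ss_refl.
apply: ss_trans (IH _ _ _) (ss_edge (hv _ _) (hn _ _)); try lia.
- move=> l hl; apply: hv; lia.
- move=> l hl; apply: hn; lia.
Qed.

Lemma walk_list x y k : walk adj x y k -> exists l : list (V -> V -> Prop),
  forall K, hyperplane adj K -> ~ sameside adj K x y -> List.In K l.
Proof.
elim=> [a|a b c k' ab _ [l hl]].
  by exists nil => K _ []; apply: ss_refl.
exists (hp adj a b :: l) => K hK nss.
case: (classic (K a b)) => [h|h].
  by left; rewrite (hyp_eq hK h).
right; apply: hl => // hbc; apply: nss; exact: ss_trans (ss_edge ab h) hbc.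
Qed.

Lemma collapse_nk K z : ~ kept adj HH K -> collapse adj HH z K = (fun _ => False).
Proof.
move=> nk; apply: functional_extensionality => y; apply: propositional_extensionality.
by split => // -[].
Qed.

Lemma Yvert_collapse z : Yvert adj HH (collapse adj HH z).
Proof.
split.
- move=> K nk; exact: (collapse_nk z nk).
- move=> K kK; exists z; apply: functional_extensionality => y.
  apply: propositional_extensionality; rewrite /collapse; tauto.
- move=> K K' kK kK'; exists z; split; split => //; exact: ss_refl.
- move=> z'; have [k w] := conn Hmg z z'; have [l hl] := walk_list w.
  exists l => K kK nc; apply: hl; first by case: kK.
  by move=> ss; apply: nc.
Qed.

Lemma collapse_edge a b K : adj a b -> K <> hp adj a b ->
  collapse adj HH a K = collapse adj HH b K.
Proof.
move=> ab nK; apply: functional_extensionality => y; apply: propositional_extensionality.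
rewrite /collapse; split=> -[kK h]; split => //; have hK : hyperplane adj K by case: kK.
- have sab : sameside adj K a b by apply: (ss_edge ab) => h'; apply: nK; exact: hyp_eq.
  exact: ss_trans (ss_sym hK sab) h.
- have sab : sameside adj K a b by apply: (ss_edge ab) => h'; apply: nK; exact: hyp_eq.
  exact: ss_trans sab h.
Qed.

Lemma Ystep a b : adj a b ->
  collapse adj HH a = collapse adj HH b \/ Yadj adj HH (collapse adj HH a) (collapse adj HH b).
Proof.
move=> ab; case: (classic (collapse adj HH a = collapse adj HH b)) => [e|ne]; first by left.
right; have allK : forall K, K <> hp adj a b -> collapse adj HH a K = collapse adj HH b K.
  by move=> K; apply: collapse_edge.
have ne0 : collapse adj HH a (hp adj a b) <> collapse adj HH b (hp adj a b).
  move=> e; apply: ne; apply: functional_extensionality => K.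
  by case: (classic (K = hp adj a b)) => [->|h] //; apply: allK.
split; try exact: Yvert_collapse.
exists (hp adj a b); split => //.
apply: NNPP => nk; apply: ne0; by rewrite !collapse_nk.
Qed.

Lemma Ywalk z1 z2 k : walk adj z1 z2 k -> exists m, m <= k /\
  walk (Yadj adj HH) (collapse adj HH z1) (collapse adj HH z2) m.
Proof.
elim=> [x|x y z k' xy _ [m [hm w]]]; first by exists 0; split => //; exact: walk0.
case: (Ystep xy) => [e|h].
  by exists m; split; [lia| rewrite e].
by exists m.+1; split; [lia| exact: walkS h w].
Qed.

End Coll.
Section Grp.
Variable G : group.
Implicit Types x y a b : G.

Lemma gmulV' x : gmul x (ginv x) = gone G.
Proof.
have h1 : gmul x (ginv x) = gmul (gmul (ginv (ginv x)) (ginv x)) (gmul x (ginv x)).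
  by rewrite gmulV gmul1.
rewrite h1 -gmulA (gmulA (ginv x) x (ginv x)) gmulV gmul1 gmulV //.
Qed.

Lemma gmul1r x : gmul x (gone G) = x.
Proof. by rewrite -(gmulV x) gmulA gmulV' gmul1. Qed.

Lemma ginv_uniq y x : gmul y x = gone G -> y = ginv x.
Proof. by move=> h; rewrite -(gmul1r y) -(gmulV' x) gmulA h gmul1. Qed.

Lemma ginvM a b : ginv (gmul a b) = gmul (ginv b) (ginv a).
Proof.
symmetry; apply: ginv_uniq.
by rewrite -gmulA (gmulA (ginv a) a b) gmulV gmul1 gmulV.
Qed.

Lemma ginv1 : ginv (gone G) = gone G.
Proof. by symmetry; apply: ginv_uniq; rewrite gmul1. Qed.
End Grp.

Section Act.
Variables (V : Type) (G : group) (act : G -> V -> V).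
Hypothesis Hact : is_action act.

Lemma htransM a b H : htrans act (gmul a b) H = htrans act a (htrans act b H).
Proof.
apply: functional_extensionality => x; apply: functional_extensionality => y.
by rewrite /htrans ginvM !(proj2 Hact).
Qed.

Lemma htrans1 H : htrans act (gone G) H = H.
Proof.
apply: functional_extensionality => x; apply: functional_extensionality => y.
by rewrite /htrans ginv1 !(proj1 Hact).
Qed.

Lemma htrans_orbit g1 g2 R :
  htrans act (gmul g2 (ginv g1)) (htrans act g1 R) = htrans act g2 R.
Proof. by rewrite htransM -(htransM (ginv g1)) gmulV htrans1. Qed.
End Act.

Lemma edge_cube V (adj : V -> V -> Prop) a b : adj a b -> adj b a -> ~ adj a a -> ~ adj b b ->
  cube adj (fun w => w = a \/ w = b).
Proof.
move=> ab ba naa nbb; have nab : a <> b by move=> e; subst.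
exists 1, (fun u : {ffun 'I_1 -> bool} => if u ord0 then b else a); split.
- move=> u u' /= e; apply/ffunP => i; rewrite (ord1 i).
  move: e; case: (u ord0); case: (u' ord0) => // e; exfalso; apply: nab; by rewrite e.
- move=> v; split.
  + by case=> ->; [exists [ffun => false] | exists [ffun => true]]; rewrite ffunE.
  + by case=> u <-; case: (u ord0); [right|left].
- move=> u u'.
  have E : [set i | u i != u' i] = if u ord0 != u' ord0 then setT else set0.
    apply/setP => i; rewrite (ord1 i) inE; by case: (u ord0 != u' ord0); rewrite inE.
  rewrite E; case: (u ord0); case: (u' ord0) => /=;
    rewrite ?cards0 ?cardsT ?card_ord; split => // h; exfalso;
    first [exact: nbb h | exact: naa h | done].
Qed.
Lemma count_le1 (P : pred nat) (s : seq nat) : uniq s ->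
  (forall i j, i \in s -> j \in s -> P i -> P j -> i = j) -> count P s <= 1.
Proof.
elim: s => [//|x s IH] /= /andP[xs us] H.
case Px: (P x) => /=.
  suff -> : count P s = 0 by [].
  apply/eqP; rewrite -leqn0 leqNgt -has_count; apply/hasPn => j js; apply/negP => Pj.
  have js' : j \in x :: s by rewrite inE js orbT.
  have e := H x j (mem_head _ _) js' Px Pj; subst.
  by rewrite js in xs.
apply: IH => // i j iS jS; apply: H; by rewrite inE ?iS ?jS orbT.
Qed.

Lemma Ywalk_count V (adj : V -> V -> Prop) HH (g : nat -> (V -> V -> Prop)) s t m :
  walk (Yadj adj HH) s t m -> forall I : seq nat, uniq I ->
  (forall i j, i \in I -> j \in I -> g i = g j -> i = j) ->
  (forall i, i \in I -> s (g i) <> t (g i)) -> size I <= m.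
Proof.
elim=> [x|x y z k xy _ IH] I uI injI dI.
  by case: I uI injI dI => [//|i I'] _ _ /(_ i (mem_head _ _)).
case: xy => _ _ [K0 [_ _ hK0]].
set p := fun i => pb (g i = K0).
have c1 : count p I <= 1.
  apply: count_le1 => // i j iI jI /pbP pi /pbP pj; apply: injI => //; by rewrite pi pj.
have hI' : size [seq i <- I | ~~ p i] <= k.
  apply: IH; first exact: filter_uniq.
  - move=> i j; rewrite !mem_filter => /andP[_ iI] /andP[_ jI]; exact: injI.
  - move=> i; rewrite mem_filter => /andP[/pbP ne iI]; rewrite -hK0 //; exact: dI.
have := count_predC p I; rewrite size_filter in hI'.
have -> : count (predC p) I = count (fun i => ~~ p i) I by [].
lia.
Qed.

Lemma run_count (P : nat -> bool) (d n : nat) :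
  (forall a b, a <= b -> b <= d -> (forall l, a <= l < b -> ~~ P l) -> b - a <= n) ->
  d <= n + n.+1 * count P (iota 0 d).
Proof.
move=> Hrun.
have claim : forall d', d' <= d -> exists r, [/\ r <= d',
    (forall l, d' - r <= l < d' -> ~~ P l) & d' <= r + n.+1 * count P (iota 0 d')].
  elim=> [|d' IH] hd.
    by exists 0; split => // l; lia.
  have [r [hr hrun hc]] := IH (ltnW hd).
  have rn : r <= n.
    have := Hrun (d' - r) d'; have -> : d' - (d' - r) = r by lia.
    apply; [lia | lia | exact: hrun].
  rewrite -addn1 iotaD count_cat /= addn0.
  case Pd: (P d').
    exists 0; split => //; first by move=> l; lia.
    rewrite mulnDr muln1 /=; lia.
  exists r.+1; split; [lia| |].
  - move=> l hl; case: (ltnP l d') => hl'.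
      apply: hrun; lia.
    have -> : l = d' by lia.
    by rewrite Pd.
  - rewrite addn0; lia.
have [r [hr hrun hc]] := claim d (leqnn d).
have := Hrun (d - r) d; have -> : d - (d - r) = r by lia.
move=> h; have : r <= n by apply: h => //; lia.
lia.
Qed.
Lemma walk_cross V (e : V -> V -> Prop) (W : V -> bool) p q k : walk e p q k ->
  W p -> ~~ W q -> exists u w, [/\ e u w, W u & ~~ W w].
Proof.
elim=> [x -> //|x y z k' xy _ IH] Wx Wz.
case Wy: (W y); first exact: IH.
by exists x, y; rewrite Wy.
Qed.

Section Main.
Variables (V : Type) (adj : V -> V -> Prop) (G : group) (act : G -> V -> V).
Variables (HH : (V -> V -> Prop) -> Prop) (n : nat) (reps : 'I_n -> (V -> V -> Prop)).
Hypothesis Hmg : median_graph adj.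
Hypothesis Hact : is_action act.
Hypothesis Hcol : strongly_collapsible adj act HH.
Hypothesis Hcov : forall H, HH H -> exists i g, H = htrans act g (reps i).
Variables (d : nat) (v : nat -> V).
Hypothesis hv : forall i, i < d -> adj (v i) (v i.+1).
Hypothesis hd : dist adj (v 0) (v d) = d.

Definition fe l := hp adj (v l) (v l.+1).

Lemma geo p q : p <= q -> q <= d -> dist adj (v p) (v q) = q - p.
Proof.
move=> pq qd.
have ws := walk_seg hv.
have l1 : dist adj (v p) (v q) <= q - p.
  apply: (dist_le Hmg); apply: (ws p q); apply/andP; split => //.
have l2 : dist adj (v 0) (v p) <= p - 0.
  apply: (dist_le Hmg); apply: (ws 0 p); apply/andP; split => //; lia.
have l3 : dist adj (v q) (v d) <= d - q.
  apply: (dist_le Hmg); apply: (ws q d); apply/andP; split => //.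
have t1 := dist_tri Hmg (v 0) (v p) (v d).
have t2 := dist_tri Hmg (v p) (v q) (v d).
lia.
Qed.

Lemma f_inj i j : i < j -> j < d -> fe i <> fe j.
Proof.
move=> ij jd e.
have h : hp adj (v i) (v i.+1) (v j) (v j.+1).
  rewrite -/(fe i) e; exact: rst_refl.
have ai : adj (v i) (v i.+1) by apply: hv; lia.
case: (hp_W Hmg ai h) => H.
- have := H (v i.+1); rewrite /Wd /= (geo (p:=i.+1) (q:=j)) ?(geo (p:=i.+1) (q:=j.+1)); try lia.
  rewrite (distC Hmg _ (v i)) (geo (p:=i) (q:=i.+1)); try lia.
  rewrite (dist_xx Hmg); lia.
- have := H (v 0); rewrite /Wd /= !geo; lia.
Qed.

Lemma f_sep l : l < d -> ~ sameside adj (fe l) (v 0) (v d).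
Proof.
move=> ld [k w].
have al : adj (v l) (v l.+1) := hv ld.
have W0 : Wd adj (v l, v l.+1) (v 0).
  rewrite /Wd /= !geo; lia.
have Wd' : ~~ Wd adj (v l, v l.+1) (v d).
  rewrite /Wd /= (distC Hmg (v d)) (distC Hmg (v d)) !geo; lia.
have [u [x [[ux nH] Wu Wx]]] := walk_cross w W0 Wd'.
apply: nH; exact: (cross_hp Hmg al erefl ux Wu Wx).
Qed.

Lemma f_hyp l : l < d -> hyperplane adj (fe l).
Proof. move=> ld; exact: hp_hyp (hv ld). Qed.

Lemma f_coll l : l < d -> ~ HH (fe l) ->
  collapse adj HH (v 0) (fe l) <> collapse adj HH (v d) (fe l).
Proof.
move=> ld nH e.
have c : collapse adj HH (v 0) (fe l) (v 0).
  split; [split; [exact: f_hyp | exact: nH] | exact: ss_refl].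
rewrite e in c; case: c => _ ss.
apply: (f_sep ld); exact: (ss_sym Hmg (f_hyp ld) ss).
Qed.

Lemma f_carrier l : l < d -> carrier adj (fe l) (v l) /\ carrier adj (fe l) (v l.+1).
Proof.
move=> ld; have al := hv ld.
have cS : cube adj (fun w => w = v l \/ w = v l.+1).
  apply: edge_cube => //; [exact: (adj_sym Hmg al)|exact: (adj_irr Hmg)|exact: (adj_irr Hmg)].
have ex : exists x y, [/\ (fun w => w = v l \/ w = v l.+1) x,
    (fun w => w = v l \/ w = v l.+1) y & fe l x y].
  by exists (v l), (v l.+1); split; [left|right|exact: rst_refl].
split; exists (fun w => w = v l \/ w = v l.+1); split => //; [left|right] => //.
Qed.

Lemma GL i j : i < j -> j < d -> (forall l, i <= l <= j -> HH (fe l)) ->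
  forall k g1 g2, fe i = htrans act g1 (reps k) -> fe j = htrans act g2 (reps k) -> False.
Proof.
move=> ij jd hHH k g1 g2 e1 e2.
pose g := gmul g2 (ginv g1).
have eg : htrans act g (fe i) = fe j by rewrite e1 e2 /g htrans_orbit.
apply: (Hcol (H:=fe i) (g:=g)).
- apply: hHH; lia.
- rewrite eg => e; apply: (f_inj ij jd); by rewrite e.
rewrite eg => K [hK [x [y [nxy cx cy]]]].
have s1 := cx (v i.+1) (f_carrier (ltn_trans ij jd)).2.
have s2 := cy (v j) (f_carrier jd).1.
apply: NNPP => nHK; apply: nxy.
suff s3 : sameside adj K (v i.+1) (v j).
  exact: ss_trans s1 (ss_trans s3 (ss_sym Hmg hK s2)).
apply: ss_seq => //.
- move=> l hl; apply: hv; lia.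
- move=> l hl hK'; apply: nHK; rewrite (hyp_eq hK hK'); apply: hHH; lia.
Qed.

Definition Pk l := pb (~ HH (fe l)).

Lemma runbound a b : a <= b -> b <= d -> (forall l, a <= l < b -> ~~ Pk l) -> b - a <= n.
Proof.
move=> ab bd hrun.
have hHH : forall l, a <= l < b -> HH (fe l).
  move=> l hl; have := hrun l hl; move/pbP; exact: NNPP.
case: (leqP b a) => [ba|ab']; first by have -> : b - a = 0 by lia.
have [k0 _] := Hcov (hHH a (ltac:(lia))).
pose o l := odflt k0 [pick k | pb (exists g, fe l = htrans act g (reps k))].
have ho : forall l, a <= l < b -> exists g, fe l = htrans act g (reps (o l)).
  move=> l hl; rewrite /o; case: pickP => [k /pbP //|none]; exfalso.
  have [k [g e]] := Hcov (hHH l hl).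
  by have := none k; move/pbP; apply; exists g.
have key : forall p q, p < q -> a <= p -> q < b -> o p = o q -> False.
  move=> p q pq ap qb E.
  have [g1 e1] := ho p ltac:(lia); have [g2 e2] := ho q ltac:(lia).
  rewrite E in e1.
  apply: (GL pq _ _ e1 e2); first lia.
  move=> l hl; apply: hHH; lia.
have inj : injective (fun i : 'I_(b - a) => o (a + i)).
  move=> i i' /= E; apply: val_inj => /=.
  case: (ltngtP i i') => // h.
  - by exfalso; apply: (key (a + i) (a + i')) => //; try lia; have := ltn_ord i'; lia.
  - by exfalso; apply: (key (a + i') (a + i)) => //; try lia; have := ltn_ord i; lia.
by have := leq_card _ inj; rewrite !card_ord.
Qed.

Lemma LB m : walk (Yadj adj HH) (collapse adj HH (v 0)) (collapse adj HH (v d)) m ->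
  d <= n + n.+1 * m.
Proof.
move=> wy.
have c := run_count runbound.
have sz : count Pk (iota 0 d) <= m.
  rewrite -size_filter; apply: (Ywalk_count (g:=fe) wy).
  - exact: filter_uniq (iota_uniq 0 d).
  - move=> i j; rewrite !mem_filter !mem_iota => /andP[_ hi] /andP[_ hj] e.
    case: (ltngtP i j) => // h; exfalso.
    + apply: (f_inj h) e; lia.
    + apply: (f_inj h) (esym e); lia.
  - move=> i; rewrite mem_filter mem_iota => /andP[/pbP hP hi].
    apply: f_coll => //; lia.
apply: leq_trans c _; by rewrite leq_add2l leq_mul2l sz orbT.
Qed.

End Main.

Theorem lemma3p9 (V : Type) (adj : V -> V -> Prop) (G : group)
    (act : G -> V -> V) (HH : (V -> V -> Prop) -> Prop) (n : nat) :
  median_graph adj ->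
  is_action act -> by_isometries adj act -> no_cube_inversions adj act ->
  (forall H, HH H -> hyperplane adj H) ->
  G_invariant act HH -> strongly_collapsible adj act HH ->
  n_orbits act HH n ->
  (forall z1 z2 dz, gdist adj z1 z2 dz ->
     exists dy, [/\ gdist (Yadj adj HH) (collapse adj HH z1) (collapse adj HH z2) dy,
                    ((dz%:Q - n%:Q) / (n.+1)%:Q <= dy%:Q)%R & dy <= dz])
  /\ (forall z1 z2 dz, collapse adj HH z1 = collapse adj HH z2 ->
        gdist adj z1 z2 dz -> dz <= n).
Proof.
move=> Hmg Hact _ _ _ _ Hcol [reps [_ _ Hcov]].
have LBm : forall z1 z2 dz m, gdist adj z1 z2 dz ->
    walk (Yadj adj HH) (collapse adj HH z1) (collapse adj HH z2) m -> dz <= n + n.+1 * m.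
  move=> z1 z2 dz m gz wy.
  have hd := gdist_dist Hmg gz.
  have [v [v0 vd hv]] := walk_fun gz.1.
  subst z1 z2.
  exact: (LB Hmg Hact Hcol Hcov hv (esym hd) wy).
split.
- move=> z1 z2 dz gz.
  have [m [hm wy]] := Ywalk Hmg HH gz.1.
  have [dy gy] := gdist_ex (ex_intro _ m wy).
  exists dy; split => //.
  + have h := LBm _ _ _ _ gz gy.1.
    have h' : (dz%:Q <= n%:Q + (n.+1)%:Q * dy%:Q)%R.
      by rewrite -!pmulrn -natrM -natrD ler_nat.
    rewrite ler_pdivrMr ?ltr0n //.
    lra.
  + exact: leq_trans (gy.2 _ wy) hm.
- move=> z1 z2 dz e gz.
  have := LBm _ _ _ 0 gz; rewrite e muln0 addn0; apply; exact: walk0.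
Qed.
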